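(* Let $G$ be a profinite-$C$ group, let $H$ be a closed subgroup of $G$ and let $N$ be a closed normal subgroup of $G$. Then: (i) If $S$ is a closed subgroup of $G$ with $G=HS$, then $S$ contains a closed permutable complement of $H$ in $G$. (ii) If $S$ is a closed subgroup of $G$ containing $N$ such that $S/N$ is a closed permutable complement of $HN/N$ in $G/N$, then there exists a closed permutable complement $K$ of $H$ in $G$ such that $S=KN$.
   Context: A permutable complement of a subgroup $H$ of a group $G$ is a subgroup $K$ with $G=HK$ and $H\cap K=1$. A profinite group $G$ is a profinite-$C$ group if every closed subgroup of $G$ has a closed permutable complement in $G$. *)

(* Defs.v *)
From HB Require Import structures.
From mathcomp Require Import all_boot monoid.
From mathcomp Require Import all_classical topology.

Set Implicit Arguments.
Unset Strict Implicit.
Unset Printing Implicit Defensive.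

Local Open Scope classical_set_scope.
Local Open Scope group_scope.

HB.mixin Record isTopologicalGroup G of Group G & Topological G := {
  mulg_continuous : continuous (fun p : G * G => p.1 * p.2) ;
  invg_continuous : continuous (fun x : G => x^-1) ;
}.

#[short(type="topologicalGroupType")]
HB.structure Definition TopologicalGroup :=
  {G of Group G & Topological G & isTopologicalGroup G}.

Definition profinite (G : topologicalGroupType) : Prop :=
  [/\ compact [set: G], hausdorff_space G & totally_disconnected [set: G]].

Section Subgroups.
Variable G : groupType.

Definition is_subgroup (H : set G) : Prop :=
  [/\ H 1, (forall x y, H x -> H y -> H (x * y)) & (forall x, H x -> H x^-1)].

Definition is_normal (N : set G) : Prop :=
  is_subgroup N /\ (forall g x, N x -> N (x ^ g)).

Definition setmul (H K : set G) : set G :=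
  [set x | exists h, exists k, [/\ H h, K k & x = h * k]].

Definition perm_complement (H K : set G) : Prop :=
  setmul H K = [set: G] /\ H `&` K = [set 1].

Definition group_hom (Q : groupType) (f : G -> Q) : Prop :=
  forall x y, f (x * y) = f x * f y.
End Subgroups.

Definition closed_subgroup (G : topologicalGroupType) (H : set G) : Prop :=
  closed H /\ is_subgroup H.

Definition closed_perm_complement (G : topologicalGroupType) (H K : set G) :=
  closed_subgroup K /\ perm_complement H K.

Definition profinite_C (G : topologicalGroupType) : Prop :=
  profinite G /\
  forall H : set G, closed_subgroup H -> exists K, closed_perm_complement H K.

(* The topological quotient G/N, up to isomorphism: pi : G -> Q is a continuous,
   open, surjective group homomorphism with kernel N. *)
Definition quotient_map (G Q : topologicalGroupType) (N : set G) (pi : G -> Q) :=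
  [/\ group_hom pi, continuous pi, (forall U : set G, open U -> open (pi @` U)),
      pi @` [set: G] = [set: Q] & pi @^-1` [set 1] = N].

(* Main.v *)
Require Import Defs.
From HB Require Import structures.
From mathcomp Require Import all_boot monoid.
From mathcomp Require Import all_classical topology.

Local Open Scope classical_set_scope.
Local Open Scope group_scope.

Lemma subgroupI (G : groupType) (A B : set G) :
  is_subgroup A -> is_subgroup B -> is_subgroup (A `&` B).
Proof.
move=> [A1 AM AV] [B1 BM BV]; split => //.
- by move=> x y [? ?] [? ?]; split; [apply: AM|apply: BM].
- by move=> x [? ?]; split; [apply: AV|apply: BV].
Qed.

Lemma part_i (G : topologicalGroupType) (H : set G) :
  profinite_C G -> closed_subgroup H ->
  forall S : set G, closed_subgroup S -> setmul H S = [set: G] ->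
     exists K, closed_perm_complement H K /\ K `<=` S.
Proof.
move=> [_ hC] [Hc Hs] S [Sc Ss] HS.
have [K [[Kc Ks] [LK LKI]]] := hC (H `&` S) (conj (closedI Hc Sc) (@subgroupI _ _ _ Hs Ss)).
exists (K `&` S); split; last by move=> x [].
split; first by split; [exact: closedI | exact: (@subgroupI _ _ _ Ks Ss)].
move: (Hs) (Ss) (Ks) => [H1 HM HV] [S1 SM SV] [K1 KM KV].
split.
- apply/seteqP; split => // g _.
  have : setmul H S g by rewrite HS.
  move=> [h [s [hH sS ->]]].
  have : setmul (H `&` S) K s by rewrite LK.
  move=> [l [k [[lH lS] kK E]]]; rewrite E.
  exists (h * l), k; split => //; first exact: (HM).
  split => //.
  have -> : k = l^-1 * (l * k) by rewrite mulKg.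
  by apply: (SM); [apply: (SV) | rewrite -E].
  by rewrite mulgA.
- apply/seteqP; split => x.
  + move=> [xH [xK xS]].
    have : (H `&` S `&` K) x by [].
    by rewrite LKI.
  + by move=> ->.
Qed.

Lemma hom1 (G Q : groupType) (f : G -> Q) : group_hom f -> f 1 = 1.
Proof.
move=> hf; apply: (@mulgI _ (f 1)).
by rewrite -hf !mulg1.
Qed.

Lemma homV (G Q : groupType) (f : G -> Q) x : group_hom f -> f x^-1 = (f x)^-1.
Proof.
move=> hf; apply: (@mulIg _ (f x)).
by rewrite -hf !mulVg hom1.
Qed.

Theorem lemma2p2 (G : topologicalGroupType) (H N : set G) :
  profinite_C G -> closed_subgroup H -> closed N -> is_normal N ->
  (* (i) *)
  (forall S : set G, closed_subgroup S -> setmul H S = [set: G] ->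
     exists K, closed_perm_complement H K /\ K `<=` S) /\
  (* (ii) *)
  (forall (Q : topologicalGroupType) (pi : G -> Q) (S : set G),
     quotient_map N pi -> closed_subgroup S -> N `<=` S ->
     closed_perm_complement (pi @` setmul H N) (pi @` S) ->
     exists K, closed_perm_complement H K /\ S = setmul K N).
Proof.
move=> hC hH0 Nc [Ns NJ].
split; first exact: part_i.
move=> Q pi S [phom _ _ psurj pker] [Sc Ss] NS [_ [HNS HNSI]].
move: (hH0) (Ss) (Ns) => [_ [H1 HM HV]] [S1 SM SV] [N1 NM NV].
have inN : forall x, pi x = 1 -> N x.
  by move=> x px; rewrite -pker.
have GHS : setmul H S = [set: G].
  apply/seteqP; split => // g _.
  have : setmul (pi @` setmul H N) (pi @` S) (pi g) by rewrite HNS.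
  move=> [a [b [[y [h [n [hH nN ->]]] <-] [s sS <-] E]]].
  rewrite -!phom in E.
  set m := (h * n * s)^-1 * g.
  have mN : N m.
    by apply: (inN); rewrite /m phom homV // E mulVg.
  exists h, (n * s * m); split => //.
  - apply: (SM); last exact: (NS). apply: (SM) => //. exact: (NS).
  - by rewrite /m !mulgA mulgV mul1g.
have HSN : forall x, H x -> S x -> N x.
  move=> x xH xS; apply: (inN).
  have : (pi @` setmul H N `&` pi @` S) (pi x).
    split; last by exists x.
    exists x => //; exists x, 1; split => //; by rewrite mulg1.
  by rewrite HNSI.
have [K [[[Kc Ks] [HK HKI]] KS]] := @part_i _ _ hC hH0 _ (conj Sc Ss) GHS.
exists K; split; first by [].
move: (Ks) => [K1 KM KV].
apply/seteqP; split => x.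
- move=> xS.
  have : setmul H K x^-1 by rewrite HK.
  move=> [h [k [hH kK E]]].
  have hx : x = k^-1 * h^-1 by rewrite -invgM -E invgK.
  have hN : N h^-1.
    apply: (HSN); first exact: (HV).
    have -> : h^-1 = k * x by rewrite hx mulVKg.
    by apply: (SM) => //; apply: (KS).
  exists k^-1, h^-1; split => //.
  exact: (KV).
- move=> [k [n [kK nN ->]]].
  by apply: (SM); [apply: (KS) | apply: (NS)].
Qed.
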